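(* Let $n\in\mathbb N$ and let $\mathbf w_n$ be the word \[ \mathbf w_n=\biggl(\prod_{i=1}^n z_it_i\biggr)\,x\,\biggl(\prod_{i=1}^n z_iy_i^{(n)}\biggr)\,x\,\biggl(\prod_{j=1}^n\biggl(\prod_{i=1}^n y_i^{(n-j)}y_i^{(n+1-j)}\biggr)\biggr). \] Then for each $1\le i\le n$ and $0\le k\le n$ we have $D(\mathbf w_n,x)=n+1$, $D(\mathbf w_n, y_i^{(k)})=k$, $D(\mathbf w_n,t_i)=0$ and $D(\mathbf w_n,z_i)=1$.
   Context: Words are elements of the free monoid over a countably infinite alphabet. In $\mathbf w_n$, the letters $x$, $z_i$, $t_i$ ($1\le i\le n$), and $y_i^{(k)}$ ($1\le i\le n$, $0\le k\le n$) are pairwise distinct, and products $\prod_{i=1}^n$ are taken in increasing order of the index. A letter is simple in a word $\mathbf w$ if it occurs exactly once in $\mathbf w$. For a letter $x$ occurring in $\mathbf w$, ${_{i\mathbf w}}x$ denotes the $i$th occurrence of $x$ in $\mathbf w$. The depth $D(\mathbf w,x)$ of a letter $x$ in $\mathbf w$ is defined inductively: the letters of depth $0$ are exactly the simple letters of $\mathbf w$; a letter $x$ has depth $k\ge1$ if it does not have depth less than $k$ and there is the first occurrence of some letter of depth $k-1$ between ${_{1\mathbf w}}x$ and ${_{2\mathbf w}}x$ in $\mathbf w$; if for no $n\ge0$ is there a first occurrence of a letter of depth $n$ between ${_{1\mathbf w}}x$ and ${_{2\mathbf w}}x$, the depth of $x$ is $\infty$. *)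

(* Defs.v *)
From mathcomp Require Import all_boot.
Set Implicit Arguments. Unset Strict Implicit. Unset Printing Implicit Defensive.

Definition letter := (nat * nat * nat)%type.
Definition word := seq letter.

Definition lx : letter := (0, 0, 0).
Definition lz (i : nat) : letter := (1, i, 0).
Definition ltt (i : nat) : letter := (2, i, 0).
Definition ly (i k : nat) : letter := (3, i, k).

Definition simple (w : word) (x : letter) : bool := count_mem x w == 1.

Definition occ1 (w : word) (x : letter) : nat := index x w.
Definition has_occ2 (w : word) (x : letter) : bool :=
  x \in drop (occ1 w x).+1 w.
(* position of the second occurrence of x in w (meaningful if has_occ2) *)
Definition occ2 (w : word) (x : letter) : nat :=
  (occ1 w x).+1 + index x (drop (occ1 w x).+1 w).

Definition first_between (w : word) (y x : letter) : bool :=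
  has_occ2 w x && (occ1 w x < occ1 w y < occ2 w x).

(* depth_info w k = (fun x => D(w,x) < k , fun x => D(w,x) = k),
   following the inductive definition of depth literally. *)
Fixpoint depth_info (w : word) (k : nat) : (pred letter * pred letter) :=
  match k with
  | 0 => (fun _ => false, fun x => simple w x)
  | k'.+1 =>
      let: (lt', eq') := depth_info w k' in
      let ltk := fun x => lt' x || eq' x in
      (ltk, fun x => ~~ ltk x && has (fun y => eq' y && first_between w y x) w)
  end.

Definition has_depth (w : word) (x : letter) (k : nat) : Prop :=
  (depth_info w k).2 x.

Definition w_ (n : nat) : word :=
  flatten [seq [:: lz i; ltt i] | i <- iota 1 n]
  ++ [:: lx]
  ++ flatten [seq [:: lz i; ly i n] | i <- iota 1 n]
  ++ [:: lx]
  ++ flatten [seq flatten [seq [:: ly i (n - j); ly i (n + 1 - j)] | i <- iota 1 n]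
             | j <- iota 1 n].

(* Main.v *)
Require Import Defs.
From mathcomp Require Import all_boot zify.

Definition FL (f : nat -> seq letter) a m := flatten [seq f j | j <- iota a m].
Definition fA i : seq letter := [:: lz i; ltt i].
Definition fB n i : seq letter := [:: lz i; ly i n].
Definition fC n j i : seq letter := [:: ly i (n - j); ly i (n + 1 - j)].
Definition fCC n j := FL (fC n j) 1 n.

Lemma wE n : w_ n = FL fA 1 n ++ lx :: FL (fB n) 1 n ++ lx :: FL (fCC n) 1 n.
Proof. by []. Qed.

Lemma split_at f a m i : a <= i < a + m ->
  FL f a m = FL f a (i - a) ++ f i ++ FL f i.+1 (a + m - i.+1).
Proof.
move=> H; rewrite /FL.
set k := a + m - i.+1.
have -> : m = (i - a) + k.+1 by rewrite /k; lia.
rewrite iotaD map_cat flatten_cat.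
have -> : a + (i - a) = i by lia.
by [].
Qed.

Lemma memFL f a m y : (y \in FL f a m) <-> exists j, a <= j < a + m /\ y \in f j.
Proof.
split.
  by move=> /flatten_mapP [j]; rewrite mem_iota => ? ?; exists j.
by move=> [j [H1 H2]]; apply/flatten_mapP; exists j; rewrite ?mem_iota.
Qed.

Lemma fb_gen (T : eqType) (P Q R : seq T) (x y : T) : x \notin P -> x \notin Q ->
  [&& x \in drop (index x (P ++ x :: Q ++ x :: R)).+1 (P ++ x :: Q ++ x :: R),
      index x (P ++ x :: Q ++ x :: R) < index y (P ++ x :: Q ++ x :: R)
    & index y (P ++ x :: Q ++ x :: R) < (index x (P ++ x :: Q ++ x :: R)).+1 +
       index x (drop (index x (P ++ x :: Q ++ x :: R)).+1 (P ++ x :: Q ++ x :: R))]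
  = [&& y \in Q, y \notin P & y != x].
Proof.
move=> xP xQ.
have -> : index x (P ++ x :: Q ++ x :: R) = size P.
  by rewrite index_cat (negbTE xP) /= eqxx addn0.
have -> : drop (size P).+1 (P ++ x :: Q ++ x :: R) = Q ++ x :: R.
  by rewrite -cat_rcons drop_cat size_rcons ltnn subnn drop0.
rewrite mem_cat in_cons eqxx orbT /=.
have -> : index x (Q ++ x :: R) = size Q.
  by rewrite index_cat (negbTE xQ) /= eqxx addn0.
rewrite index_cat.
case: (boolP (y \in P)) => yP /=.
  have h : index y P < size P by rewrite index_mem.
  by rewrite andbF; lia.
case: (eqVneq y x) => [->|yx] /=; first by rewrite andbF; lia.
rewrite index_cat andbT.
case: (boolP (y \in Q)) => yQ.
  have h : index y Q < size Q by rewrite index_mem.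
  lia.
lia.
Qed.

Lemma fb_split (P Q R : word) (x y : letter) : x \notin P -> x \notin Q ->
  first_between (P ++ x :: Q ++ x :: R) y x = [&& y \in Q, y \notin P & y != x].
Proof. exact: fb_gen. Qed.


Lemma one_split (P R : word) (x : letter) : x \notin P -> x \notin R ->
  ~~ has_occ2 (P ++ x :: R) x /\ count_mem x (P ++ x :: R) = 1.
Proof.
move=> xP xR; split.
  rewrite /has_occ2 /occ1 index_cat (negbTE xP) /= eqxx addn0.
  by rewrite -cat_rcons drop_cat size_rcons ltnn subnn drop0.
rewrite count_cat /= eqxx; move/count_memPn: xP => ->; move/count_memPn: xR => ->.
by [].
Qed.

Lemma notin_occ2 w x : x \notin w -> ~~ has_occ2 w x.
Proof. by move=> xw; apply/negP => /mem_drop; apply/negP. Qed.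

Lemma fb_occ2 w y x : first_between w y x -> has_occ2 w x.
Proof. by case/andP. Qed.

Definition D n (x : letter) : nat :=
  let: (a, _, c) := x in
  if a == 0 then n.+1 else if a == 1 then 1 else if a == 2 then 0 else c.

Definition good1 n x := D n x = 0 /\
  exists P R, w_ n = P ++ x :: R /\ x \notin P /\ x \notin R.
Definition good2 n x := 1 <= D n x /\
  exists P Q R, w_ n = P ++ x :: Q ++ x :: R /\ x \notin P /\ x \notin Q /\
    (exists y, y \in Q /\ y \notin P /\ y != x /\ D n y = (D n x).-1) /\
    (forall y, y \in Q -> y \notin P -> y != x -> (D n x).-1 <= D n y).

Lemma memA y a m : y \in FL fA a m ->
  exists j, a <= j < a + m /\ (y = lz j \/ y = ltt j).
Proof.
case/memFL => j [Hj]; rewrite !inE => /orP[] /eqP ->; exists j; tauto.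
Qed.
Lemma memB n y a m : y \in FL (fB n) a m ->
  exists j, a <= j < a + m /\ (y = lz j \/ y = ly j n).
Proof.
case/memFL => j [Hj]; rewrite !inE => /orP[] /eqP ->; exists j; tauto.
Qed.
Lemma memC1 n jj y a m : y \in FL (fC n jj) a m ->
  exists j, a <= j < a + m /\ (y = ly j (n - jj) \/ y = ly j (n + 1 - jj)).
Proof.
case/memFL => j [Hj]; rewrite !inE => /orP[] /eqP ->; exists j; tauto.
Qed.
Lemma memC n y a m : y \in FL (fCC n) a m ->
  exists jj, a <= jj < a + m /\ exists j, 1 <= j < 1 + n /\
     (y = ly j (n - jj) \/ y = ly j (n + 1 - jj)).
Proof.
by case/memFL => jj [Hjj] /memC1 H; exists jj.
Qed.

Ltac destr_mem H :=
  rewrite ?mem_cat ?in_cons ?in_nil ?orbF in H;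
  repeat match type of H with
  | is_true (_ || _) => case/orP: H => H
  | is_true (_ \in _ ++ _) => rewrite mem_cat in H
  | is_true (_ \in _ :: _) => rewrite in_cons in H
  | is_true (_ \in [::]) => rewrite in_nil in H
  | is_true false => discriminate H
  | is_true (_ \in FL fA _ _) =>
      let j := fresh "j" in let Hj := fresh "Hj" in case/memA: H => j [Hj [H|H]]
  | is_true (_ \in FL (fB _) _ _) =>
      let j := fresh "j" in let Hj := fresh "Hj" in case/memB: H => j [Hj [H|H]]
  | is_true (_ \in FL (fC _ _) _ _) =>
      let j := fresh "j" in let Hj := fresh "Hj" in case/memC1: H => j [Hj [H|H]]
  | is_true (_ \in FL (fCC _) _ _) =>
      let j := fresh "j" in let Hj := fresh "Hj" in
      let j2 := fresh "j" in let Hj2 := fresh "Hj" in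
      case/memC: H => j [Hj [j2 [Hj2 [H|H]]]]
  | is_true (_ == _) => move/eqP: H => H
  end.

Ltac let_inj := unfold lx, lz, ltt, ly in *;
  repeat match goal with
  | H : (_, _, _) = (_, _, _) |- _ => injection H; clear H;
     repeat (let e := fresh "e" in intro e;
             match type of e with @eq _ ?a ?b =>
               let e2 := fresh "e" in have e2 : (a = b :> nat) := e; clear e end)
  end.

Ltac notin_tac := let H := fresh "H" in apply/negP => H; destr_mem H; let_inj; lia.

Lemma mem_intro_FL f a m j y : a <= j < a + m -> y \in f j -> y \in FL f a m.
Proof. by move=> H1 H2; apply/memFL; exists j. Qed.

Ltac neq_tac := let H := fresh "H" in apply/eqP => H; let_inj; lia.
Ltac lb_tac := let y := fresh "y" in let yQ := fresh "yQ" in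
  let yP := fresh "yP" in let yx := fresh "yx" in
  move=> y yQ yP yx; destr_mem yQ; subst y; rewrite /D /=; try lia.

Lemma dec_x n : 1 <= n -> good2 n lx.
Proof.
move=> n1; rewrite /good2; split; first by [].
exists (FL fA 1 n), (FL (fB n) 1 n), (FL (fCC n) 1 n).
split; first by [].
split; first notin_tac. split; first notin_tac.
split.
  exists (ly 1 n); split.
    by apply: (@mem_intro_FL _ _ _ 1); [lia | rewrite !inE eqxx orbT].
  split; first notin_tac. split; first neq_tac. by [].
lb_tac.
exfalso; move/negP: yP; apply.
by apply: (@mem_intro_FL _ _ _ j) => //; rewrite !inE eqxx.
Qed.

Lemma dec_z n i : 1 <= i <= n -> good2 n (lz i).
Proof.
move=> hi; rewrite /good2; split; first by [].
have hi' : 1 <= i < 1 + n by lia.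
exists (FL fA 1 (i - 1)),
  (ltt i :: FL fA i.+1 (1 + n - i.+1) ++ lx :: FL (fB n) 1 (i - 1)),
  (ly i n :: FL (fB n) i.+1 (1 + n - i.+1) ++ lx :: FL (fCC n) 1 n).
split.
  rewrite wE (@split_at fA _ _ _ hi') (@split_at (fB n) _ _ _ hi') -!catA /=.
  by rewrite -?catA.
split; first notin_tac. split; first notin_tac.
split.
  exists (ltt i); split; first by rewrite inE eqxx.
  split; first notin_tac. split; first neq_tac. by [].
by move=> y _ _ _.
Qed.

Lemma dec_t n i : 1 <= i <= n -> good1 n (ltt i).
Proof.
move=> hi; rewrite /good1; split; first by [].
have hi' : 1 <= i < 1 + n by lia.
exists (FL fA 1 (i - 1) ++ [:: lz i]),
  (FL fA i.+1 (1 + n - i.+1) ++ lx :: FL (fB n) 1 n ++ lx :: FL (fCC n) 1 n).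
split.
  rewrite wE (@split_at fA _ _ _ hi') -!catA /=.
  by rewrite -?catA.
split; first notin_tac. notin_tac.
Qed.

Ltac inP_tac j := exfalso;
  match goal with yP : is_true (~~ (_ \in _)) |- _ => move/negP: yP; apply end;
  rewrite ?mem_cat; apply/orP; left;
  apply: (@mem_intro_FL _ _ _ j); [lia | by rewrite !inE ?eqxx ?orbT].

Lemma dec_yn n i : 1 <= i <= n -> good2 n (ly i n).
Proof.
move=> hi; rewrite /good2; split; first by rewrite /D /=; lia.
have hi' : 1 <= i < 1 + n by lia.
have h1 : 1 <= 1 < 1 + n by lia.
exists (FL fA 1 n ++ lx :: FL (fB n) 1 (i - 1) ++ [:: lz i]),
  (FL (fB n) i.+1 (1 + n - i.+1) ++ lx :: FL (fC n 1) 1 (i - 1) ++ [:: ly i (n - 1)]),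
  (FL (fC n 1) i.+1 (1 + n - i.+1) ++ FL (fCC n) 2 (1 + n - 2)).
split.
  rewrite wE (@split_at (fB n) _ _ _ hi') (@split_at (fCC n) _ _ _ h1).
  have e0 : FL (fCC n) 1 (1 - 1) = [::] by [].
  have hC : fC n 1 i = [:: ly i (n - 1); ly i n] by rewrite /fC addnK.
  rewrite e0 [fCC n 1]/fCC (@split_at (fC n 1) _ _ _ hi') hC -!catA /=.
  do 4 rewrite -?catA /=; reflexivity.
split; first notin_tac. split; first notin_tac.
split.
  exists (ly i (n - 1)); split; first by rewrite !(mem_cat, in_cons, eqxx, orbT).
  split; first notin_tac. split; first neq_tac. by rewrite /D /=; lia.
lb_tac.
exfalso.
match goal with yP : is_true (~~ (_ \in _)) |- _ => move/negP: yP; apply end.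
rewrite ?mem_cat; apply/orP; left.
apply: (@mem_intro_FL _ _ _ j); first lia.
by rewrite !inE ?eqxx ?orbT.
Qed.

Lemma dec_yk n i k : 1 <= i <= n -> 1 <= k < n -> good2 n (ly i k).
Proof.
move=> hi hk; rewrite /good2; split; first by rewrite /D /=; lia.
have hi' : 1 <= i < 1 + n by lia.
have h1 : 1 <= n - k < 1 + n by lia.
have h2 : (n - k).+1 <= (n - k).+1 < (n - k).+1 + (1 + n - (n - k).+1) by lia.
exists (FL fA 1 n ++ lx :: FL (fB n) 1 n ++ lx :: FL (fCC n) 1 (n - k - 1)
          ++ FL (fC n (n - k)) 1 (i - 1)),
  (ly i k.+1 :: FL (fC n (n - k)) i.+1 (1 + n - i.+1) ++
     FL (fC n (n - k).+1) 1 (i - 1) ++ [:: ly i (k - 1)]),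
  (FL (fC n (n - k).+1) i.+1 (1 + n - i.+1) ++
     FL (fCC n) (n - k).+2 ((n - k).+1 + (1 + n - (n - k).+1) - (n - k).+2)).
split.
  rewrite wE (@split_at (fCC n) _ _ _ h1) (@split_at (fCC n) _ _ _ h2).
  have e0 : FL (fCC n) (n - k).+1 ((n - k).+1 - (n - k).+1) = [::] by rewrite subnn.
  have hC1 : fC n (n - k) i = [:: ly i k; ly i k.+1].
    have e1 : n - (n - k) = k by lia.
    have e2 : n + 1 - (n - k) = k.+1 by lia.
    by rewrite /fC e1 e2.
  have hC2 : fC n (n - k).+1 i = [:: ly i (k - 1); ly i k].
    have e1 : n - (n - k).+1 = k - 1 by lia.
    have e2 : n + 1 - (n - k).+1 = k by lia.
    by rewrite /fC e1 e2.
  rewrite e0 [fCC n (n - k)]/fCC [fCC n (n - k).+1]/fCC.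
  rewrite (@split_at (fC n (n - k)) _ _ _ hi') (@split_at (fC n (n - k).+1) _ _ _ hi').
  rewrite hC1 hC2 -!catA /=.
  do 4 rewrite -?catA /=; reflexivity.
split; first notin_tac. split; first notin_tac.
split.
  exists (ly i (k - 1)); split; first by rewrite !(mem_cat, in_cons, eqxx, orbT).
  split; first notin_tac. split; first neq_tac. by rewrite /D /=; lia.
lb_tac.
Qed.

Lemma dec_y0 n i : 1 <= i <= n -> good1 n (ly i 0).
Proof.
move=> hi; rewrite /good1; split; first by [].
have hi' : 1 <= i < 1 + n by lia.
have h1 : 1 <= n < 1 + n by lia.
exists (FL fA 1 n ++ lx :: FL (fB n) 1 n ++ lx :: FL (fCC n) 1 (n - 1)
          ++ FL (fC n n) 1 (i - 1)),
  (ly i 1 :: FL (fC n n) i.+1 (1 + n - i.+1)).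
split.
  rewrite wE (@split_at (fCC n) _ _ _ h1).
  have e0 : FL (fCC n) n.+1 (1 + n - n.+1) = [::].
    by rewrite (_ : 1 + n - n.+1 = 0) //; lia.
  have hC : fC n n i = [:: ly i 0; ly i 1].
    have e1 : n - n = 0 by lia.
    have e2 : n + 1 - n = 1 by lia.
    by rewrite /fC e1 e2.
  rewrite e0 [fCC n n]/fCC (@split_at (fC n n) _ _ _ hi') hC -!catA /=.
  rewrite ?cats0; do 4 rewrite -?catA /=; reflexivity.
split; first notin_tac. notin_tac.
Qed.

Lemma mem_w n x : x \in w_ n -> x = lx \/ exists i,
  (x = lz i \/ x = ltt i \/ exists k, x = ly i k /\ k <= n) /\ 1 <= i <= n.
Proof.
rewrite wE => H.
destr_mem H; subst x;
  first [by left
        | right; eexists; split;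
          [first [by left | by right; left
                 | right; right; eexists; split; [reflexivity | lia]] | lia]].
Qed.

Lemma classify n x : 1 <= n -> x \in w_ n -> good1 n x \/ good2 n x.
Proof.
move=> n1 /mem_w [->|[i [H hi]]]; first by right; apply: dec_x.
case: H => [->|[->|[k [-> hk]]]].
- by right; apply: dec_z.
- by left; apply: dec_t.
case: (posnP k) => [->|k0]; first by left; apply: dec_y0.
case: (ltngtP k n) => hkn; [|lia|].
  by right; apply: dec_yk => //; lia.
by right; rewrite hkn; apply: dec_yn.
Qed.

Lemma good1_facts n x : good1 n x ->
  [/\ ~~ has_occ2 (w_ n) x, count_mem x (w_ n) = 1 & x \in w_ n].
Proof.
case=> _ [P [R [E [xP xR]]]]; rewrite E.
have [h1 h2] := one_split _ _ _ xP xR.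
by split => //; rewrite mem_cat in_cons eqxx orbT.
Qed.

Lemma good2_facts n x : good2 n x -> count_mem x (w_ n) != 1 /\ x \in w_ n.
Proof.
case=> _ [P [Q [R [E _]]]]; rewrite E.
rewrite count_cat /= count_cat /= eqxx mem_cat in_cons eqxx orbT; split => //.
lia.
Qed.

Lemma depth_char n k : 1 <= n -> forall x,
  (depth_info (w_ n) k).1 x = (x \in w_ n) && (D n x < k) /\
  (depth_info (w_ n) k).2 x = (x \in w_ n) && (D n x == k).
Proof.
move=> n1; elim: k => [|k IH] x.
  split; first by rewrite /= ltn0 andbF.
  rewrite /= /simple.
  case: (boolP (x \in w_ n)) => xw /=.
    case: (classify _ _ n1 xw) => g.
      by case: (good1_facts _ _ g) => _ -> _; case: g => ->.
    case: (good2_facts _ _ g) => c _; case: g => d _.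
    have -> : (D n x == 0) = false by lia.
    by rewrite (negbTE c).
  by move/count_memPn: xw => ->.
rewrite /=.
have IH' := IH.
move: IH'; case: (depth_info (w_ n) k) => lt' eq' IH' /=.
have hlt : forall y, lt' y = (y \in w_ n) && (D n y < k) by move=> y; case: (IH' y).
have heq : forall y, eq' y = (y \in w_ n) && (D n y == k) by move=> y; case: (IH' y).
split.
  rewrite hlt heq; case: (x \in w_ n) => //=; lia.
rewrite hlt heq.
case: (boolP (x \in w_ n)) => xw /=; last first.
  apply/negbTE/hasPn => y yw; apply/negP => /andP [_ /fb_occ2].
  by apply/negP/notin_occ2.
case: (classify _ _ n1 xw) => g.
  have [ho _ _] := good1_facts _ _ g.
  case: g => -> _.
  transitivity false; last by [].
  apply/negbTE; rewrite negb_and; apply/orP; right; apply/hasPn => y yw; apply/negP => /andP [_ /fb_occ2].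
  by apply/negP.
case: g => d [P [Q [R [E [xP [xQ [[y0 [y0Q [y0P [y0x y0D]]]] lb]]]]]]].
have fbE : forall y, first_between (w_ n) y x = [&& y \in Q, y \notin P & y != x].
  by move=> y; rewrite E (fb_split _ _ _ _ _ xP xQ).
have [lek | gtk] := leqP (D n x) k.
  have -> : (D n x < k) || (D n x == k) = true by lia.
  by rewrite /=; lia.
have -> : (D n x < k) || (D n x == k) = false by lia.
rewrite /=.
case: (eqVneq (D n x) k.+1) => [dx | dx].
  apply/hasP; exists y0.
    by rewrite E mem_cat in_cons mem_cat y0Q /= !orbT.
  rewrite heq fbE y0Q y0P y0x /=.
  have -> : y0 \in w_ n by rewrite E mem_cat in_cons mem_cat y0Q /= !orbT.
  by rewrite /=; lia.
apply/hasPn => y yw; rewrite heq fbE; apply/negP => /andP [/andP [_ /eqP dy] /and3P [yQ yP yx]].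
have := lb y yQ yP yx; lia.
Qed.

Theorem lemma2 (n : nat) : 1 <= n ->
  [/\ has_depth (w_ n) lx n.+1,
      (forall i k, 1 <= i <= n -> k <= n -> has_depth (w_ n) (ly i k) k),
      (forall i, 1 <= i <= n -> has_depth (w_ n) (ltt i) 0)
    & (forall i, 1 <= i <= n -> has_depth (w_ n) (lz i) 1)].
Proof.
move=> n1.
have key : forall x k, (x \in w_ n) -> D n x = k -> has_depth (w_ n) x k.
  move=> x k xw dk; rewrite /has_depth; case: (depth_char n k n1 x) => _ ->.
  by rewrite xw dk eqxx.
split.
- apply: key => //; by case: (good2_facts _ _ (dec_x _ n1)).
- move=> i k hi hk; apply: key => //.
  case: (posnP k) => [->|k0]; first by case: (good1_facts _ _ (dec_y0 _ _ hi)).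
  case: (ltngtP k n) => hkn; [|lia|].
    by case: (good2_facts _ _ (dec_yk _ _ _ hi (ltac:(lia) : 1 <= k < n))).
  by rewrite hkn; case: (good2_facts _ _ (dec_yn _ _ hi)).
- move=> i hi; apply: key => //; by case: (good1_facts _ _ (dec_t _ _ hi)).
- move=> i hi; apply: key => //; by case: (good2_facts _ _ (dec_z _ _ hi)).
Qed.
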